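(* Let $d\ge1$, $x_1<x_2$, $x_0\in[x_1,x_2]$, let $p,r_1,\dots,r_d$ be functions on $[x_1,x_2]$ and $u_0$ a nonvanishing function on $[x_1,x_2]$ such that $M_0=\sup_{[x_1,x_2]}\frac{1}{|pu_0^2|}$ and $M_i=\sup_{[x_1,x_2]}|r_iu_0^2|$ ($i=1,\dots,d$) are finite. Then for every admissible $\mathbf j\in\mathbb Z_{\ge0}^d$ and every $x\in[x_1,x_2]$, $$|\tilde X^{(\mathbf j)}(x)|\le\tilde c_{\mathbf j}\,M_0^{\left[\frac{|\mathbf j|}{2}\right]}M_1^{\left[\frac{j_1+1}{2}\right]}M_2^{\left[\frac{j_2+1}{2}\right]}\cdots M_d^{\left[\frac{j_d+1}{2}\right]}\,|x-x_0|^{|\mathbf j|}.$$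
   Context: $[a]$ denotes the greatest integer not exceeding $a$. Notation: $\int f$ denotes $x\mapsto\int_{x_0}^x f(s)\,ds$; $|\mathbf j|=j_1+\cdots+j_d$; $\delta_i$ the $i$-th standard basis vector. A multiindex $\mathbf j\in\mathbb Z^d$ is admissible if at most one entry is odd. Formal powers: $\tilde X^{(\mathbf 0)}\equiv1$; $\tilde X^{(\mathbf j)}\equiv0$ if some $j_i<0$; for admissible $\mathbf j\ge0$, $\mathbf j\ne\mathbf 0$: if $|\mathbf j|$ is odd and $j_i$ is its odd entry, $\tilde X^{(\mathbf j)}=|\mathbf j|\int r_iu_0^2\tilde X^{(\mathbf j-\delta_i)}$; if $|\mathbf j|$ is even, $\tilde X^{(\mathbf j)}=|\mathbf j|\int\frac{1}{pu_0^2}\sum_{i=1}^d\tilde X^{(\mathbf j-\delta_i)}$. The integers $\tilde c_{\mathbf j}$ are defined by $\tilde c_{\mathbf 0}=1$, $\tilde c_{\mathbf j}=0$ if some $j_i<0$, and for admissible $\mathbf j\ge0$, $\mathbf j\neq\mathbf 0$: $\tilde c_{\mathbf j}=\tilde c_{\mathbf j-\delta_i}$ if $|\mathbf j|$ is odd with odd entry $j_i$, and $\tilde c_{\mathbf j}=\sum_{i=1}^d\tilde c_{\mathbf j-\delta_i}$ if $|\mathbf j|$ is even. *)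

(* Defs.v *)
From HB Require Import structures.
From mathcomp Require Import all_boot all_order all_algebra.
From mathcomp Require Import all_classical all_reals all_analysis.
Set Implicit Arguments. Unset Strict Implicit. Unset Printing Implicit Defensive.
Import Order.TTheory GRing.Theory Num.Theory.
Local Open Scope ring_scope.
Local Open Scope classical_set_scope.

Section Defs.
Variable R : realType.

Definition oint (f : R -> R) (a b : R) : R :=
  if a <= b then Rintegral lebesgue_measure `[a, b] f
  else - Rintegral lebesgue_measure `[b, a] f.

Variable d : nat.

Definition mnorm (j : 'I_d -> nat) : nat := (\sum_(i < d) j i)%N.

(* j - delta_i  (only used when j_i > 0) *)
Definition mdec (j : 'I_d -> nat) (i : 'I_d) : 'I_d -> nat :=
  fun k => if k == i then (j k).-1 else j k.

Definition admissible (j : 'I_d -> nat) : Prop :=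
  (#|[pred i : 'I_d | odd (j i)]| <= 1)%N.

Variables (p u0 : R -> R) (r : 'I_d -> R -> R) (x0 : R).

(* Formal powers, by recursion on the fuel n = |j|. A term X^(j - delta_i)
   with j_i = 0 (a negative entry) is 0. *)
Fixpoint Xrec (n : nat) (j : 'I_d -> nat) : R -> R :=
  match n with
  | 0%N => fun _ => 1
  | n'.+1 =>
    if odd n then
      match [pick i | odd (j i)] with
      | Some i => fun x => n%:R *
          oint (fun s => r i s * u0 s ^+ 2 * Xrec n' (mdec j i) s) x0 x
      | None => fun _ => 0
      end
    else fun x => n%:R *
      oint (fun s => (p s * u0 s ^+ 2)^-1 *
              \sum_(i < d) (if (0 < j i)%N then Xrec n' (mdec j i) s else 0))
           x0 x
  end.

Definition Xt (j : 'I_d -> nat) : R -> R := Xrec (mnorm j) j.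

End Defs.

Section Cdefs.
Variable d : nat.
Fixpoint crec (n : nat) (j : 'I_d -> nat) : nat :=
  match n with
  | 0%N => 1%N
  | n'.+1 =>
    if odd n then
      match [pick i | odd (j i)] with
      | Some i => crec n' (mdec j i)
      | None => 0%N
      end
    else (\sum_(i < d) (if (0 < j i)%N then crec n' (mdec j i) else 0))%N
  end.
Definition ct (j : 'I_d -> nat) : nat := crec (mnorm j) j.
End Cdefs.

(* Main.v *)
Require Import Defs.
From HB Require Import structures.
From mathcomp Require Import all_boot all_order all_algebra.
From mathcomp Require Import all_classical all_reals all_analysis.
From mathcomp Require Import ring lra.
Import Order.TTheory GRing.Theory Num.Theory numFieldNormedType.Exports.
Local Open Scope ring_scope.
Local Open Scope classical_set_scope.

Section S.
Variable R : realType.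
Local Notation mu := (@lebesgue_measure R).

Lemma ftc_all (F f : R -> R) (a b : R) : a < b ->
  (forall s, is_derive (s:R) (1:R) F (f s)) -> continuous f ->
  (\int[mu]_(x in `[a, b]) (f x)%:E = (F b - F a)%:E)%E.
Proof.
move=> ab dF cf.
have dv : forall s, derivable F s 1 by move=> s; exact: (@ex_derive _ _ _ _ _ _ _ (dF s)).
have cF : continuous F.
  by move=> s; apply: differentiable_continuous; apply/derivable1_diffP.
rewrite EFinB; apply: continuous_FTC2 => //.
- by apply: continuous_subspaceT.
- split; first by move=> s _.
  + exact/cvg_at_right_filter/cF.
  + exact/cvg_at_left_filter/cF.
- by move=> s _; rewrite derive1E derive_val.
Qed.

Lemma dpow (a : R) m s : is_derive (s:R) (1:R) (fun s => (s - a) ^+ m.+1 / m.+1%:R) ((s - a) ^+ m).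
Proof.
have h1 : is_derive (s:R) (1:R) (fun s => s - a) 1.
  apply: is_derive_eq; by rewrite subr0.
have h2 := @is_deriveX _ _ (fun s => s - a) m.+1 s 1 _ h1.
have h3 := @is_deriveM _ _ ((fun s => s - a) ^+ m.+1) (cst (m.+1%:R^-1)) s 1 _ _ h2 (is_derive_cst _ _ _).
have -> : (fun s => (s - a) ^+ m.+1 / m.+1%:R) = ((fun s => s - a) ^+ m.+1) * (cst (m.+1%:R^-1)).
  by rewrite funeqE => y; rewrite /= !fctE.
apply: (is_derive_eq h3).
rewrite /= scaler0 add0r.
rewrite /= -[_%:A]/(_ * 1) mulr1 /GRing.scale /= mulrA mulVf ?mul1r //.

Qed.

Lemma int_mono (D : set R) (f g : R -> \bar R) : (forall x, D x -> 0 <= f x)%E ->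
  (forall x, D x -> f x <= g x)%E ->
  (\int[mu]_(x in D) f x <= \int[mu]_(x in D) g x)%E.
Proof.
move=> f0 fg.
rewrite !ge0_integralE //; last by move=> x Dx; exact: le_trans (f0 x Dx) (fg x Dx).
apply: le_ereal_sup => _ [h hf <-]; exists h => //= x.
apply: le_trans (hf x) _; rewrite /patch; case: ifP => // /[1!inE] xD.
exact: fg.
Qed.

Lemma Rint_le (D : set R) (f g : R -> R) (v : R) :
  (forall x, D x -> `|f x| <= g x) ->
  (\int[mu]_(x in D) (g x)%:E = v%:E)%E ->
  `|Rintegral mu D f| <= v.
Proof.
move=> fg gv; rewrite /Rintegral integralE.
have hP : (0 <= \int[mu]_(x in D) (EFin \o f)^\+ x <= v%:E)%E.
  apply/andP; split; first by apply: integral_ge0 => x _; exact: funepos_ge0.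
  rewrite -gv; apply: int_mono => [x _|x Dx]; first exact: funepos_ge0.
  rewrite funeposE /= -EFin_max lee_fin; have := fg x Dx.
  rewrite ge_max => h; apply/andP; split; [exact: le_trans (ler_norm _) h | exact: le_trans (normr_ge0 _) h].
have hN : (0 <= \int[mu]_(x in D) (EFin \o f)^\- x <= v%:E)%E.
  apply/andP; split; first by apply: integral_ge0 => x _; exact: funeneg_ge0.
  rewrite -gv; apply: int_mono => [x _|x Dx]; first exact: funeneg_ge0.
  rewrite funenegE /= -EFin_max lee_fin; have := fg x Dx.
  rewrite ge_max => h; apply/andP; split; [by rewrite -normrN in h; exact: le_trans (ler_norm _) h | exact: le_trans (normr_ge0 _) h].
move: hP hN.
case: (\int[mu]_(x in D) (EFin \o f)^\+ x)%E => [p| |] //;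
case: (\int[mu]_(x in D) (EFin \o f)^\- x)%E => [n| |] //.
all: rewrite ?leye_eq ?andbF //.
rewrite /= !lee_fin => /andP[p0 pv] /andP[n0 nv].
rewrite ler_norml; apply/andP; split; lra.
Qed.

Lemma cont_of (g dg : R -> R) : (forall s, is_derive (s:R) (1:R) g (dg s)) -> continuous g.
Proof.
move=> dF s; apply: differentiable_continuous; apply/derivable1_diffP.
exact: (@ex_derive _ _ _ _ _ _ _ (dF s)).
Qed.

Lemma dlin (e a : R) s : is_derive (s:R) (1:R) (fun s => e * (s - a)) e.
Proof.
have h1 : is_derive (s:R) (1:R) (fun s => s - a) 1.
  apply: is_derive_eq; by rewrite subr0.
have h3 := @is_deriveM _ _ (cst e) (fun s => s - a) s 1 _ _ (is_derive_cst _ _ _) h1.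
have -> : (fun s => e * (s - a)) = (cst e) * (fun s => s - a).
  by rewrite funeqE => y; rewrite /= !fctE.
apply: (is_derive_eq h3).
by rewrite /= scaler0 addr0 /GRing.scale /= mulr1.
Qed.

Lemma dpowl (e a : R) m s : is_derive (s:R) (1:R)
   (fun s => (e * (s - a)) ^+ m.+1 / m.+1%:R) (e * (e * (s - a)) ^+ m).
Proof.
have h2 := @is_deriveX _ _ (fun s => e * (s - a)) m.+1 s 1 _ (dlin e a s).
have h3 := @is_deriveM _ _ ((fun s => e * (s - a)) ^+ m.+1) (cst (m.+1%:R^-1)) s 1 _ _ h2 (is_derive_cst _ _ _).
have -> : (fun s => (e * (s - a)) ^+ m.+1 / m.+1%:R) = ((fun s => e * (s - a)) ^+ m.+1) * (cst (m.+1%:R^-1)).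
  by rewrite funeqE => y; rewrite /= !fctE.
apply: (is_derive_eq h3).
rewrite /= scaler0 add0r /GRing.scale /= mulrA mulrA mulVf ?mul1r ?pnatr_eq0 //.
by rewrite mulrC.
Qed.

Lemma cpow (e a : R) m : continuous (fun s => (e * (s - a)) ^+ m).
Proof.
case: m => [|m]; first by move=> s; exact: cvg_cst.
have h : forall s, is_derive (s:R) (1:R) (fun s => (e * (s - a)) ^+ m.+1) ((m.+1%:R * (e * (s - a)) ^+ m) *: e).
  move=> s; have h2 := @is_deriveX _ _ (fun s => e * (s - a)) m.+1 s 1 _ (dlin e a s).
  have -> : (fun s => (e * (s - a)) ^+ m.+1) = ((fun s => e * (s - a)) ^+ m.+1).
    by rewrite funeqE => y; rewrite /= !fctE.
  exact: h2.
exact: cont_of h.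
Qed.

Lemma dscale (C : R) (F : R -> R) s df : is_derive (s:R) (1:R) F df ->
  is_derive (s:R) (1:R) (fun s => C * F s) (C * df).
Proof.
move=> h.
have h3 := @is_deriveM _ _ (cst C) F s 1 _ _ (is_derive_cst _ _ _) h.
have -> : (fun s => C * F s) = (cst C) * F by rewrite funeqE => y; rewrite /= !fctE.
apply: (is_derive_eq h3).
by rewrite /= scaler0 addr0.
Qed.

Lemma int_pow_r C a b m : a < b ->
  (\int[mu]_(s in `[a, b]) (C * (s - a) ^+ m)%:E = (C * ((b - a) ^+ m.+1 / m.+1%:R))%:E)%E.
Proof.
move=> ab.
have := @ftc_all _ _ a b ab (fun s => @dscale C _ s _ (dpowl 1 a m s)).
rewrite !mul1r subrr expr0n /= mul0r mulr0 subr0 => <-.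
  by apply: eq_integral => s _; rewrite !mul1r.
by move=> s; apply: cvgM; [exact: cvg_cst | apply: cvgM; [exact: cvg_cst | exact: cpow]].
Qed.

Lemma int_pow_l C a b m : a < b ->
  (\int[mu]_(s in `[a, b]) (C * (b - s) ^+ m)%:E = (C * ((b - a) ^+ m.+1 / m.+1%:R))%:E)%E.
Proof.
move=> ab.
have hd : forall s, is_derive (s:R) (1:R)
   (fun s => - ((-1 * (s - b)) ^+ m.+1 / m.+1%:R)) ((b - s) ^+ m).
  move=> s; have h := is_deriveN (dpowl (-1) b m s).
  apply: (is_derive_eq h).
  by rewrite !mulN1r opprK opprB.
have := @ftc_all _ _ a b ab (fun s => @dscale C _ s _ (hd s)).
rewrite subrr mulr0 expr0n /= mul0r oppr0 mulr0 sub0r mulN1r mulrN opprK opprB => <- //.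
have -> : (fun s0 => C * (b - s0)^+m) = (fun s0 => C * (-1*(s0-b))^+m).
  by rewrite funeqE => y; rewrite mulN1r opprB.
by move=> s; apply: cvgM; [exact: cvg_cst | exact: cpow].
Qed.

Lemma oint_bound (f : R -> R) (C : R) (m : nat) (x0 x : R) : 0 <= C ->
  (forall s, Num.min x0 x <= s <= Num.max x0 x -> `|f s| <= C * `|s - x0| ^+ m) ->
  `|oint f x0 x| <= C * (`|x - x0| ^+ m.+1 / m.+1%:R).
Proof.
move=> C0 hf; rewrite /oint; case: ifPn => hx.
  move: hx; rewrite le_eqVlt => /predU1P[<-|hx].
    rewrite set_itv1 Rintegral_set1 normr0 subrr normr0 expr0n /= mul0r mulr0 //.
  rewrite (ger0_norm (x := x - x0)); last by rewrite subr_ge0 ltW.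
refine (@Rint_le `[x0, x] f _ _ _ (@int_pow_r C x0 x m hx)) => s /=; rewrite in_itv /= => /andP[s0 sx].
  rewrite -[s - x0]ger0_norm ?subr_ge0 //; apply: hf.
  by rewrite ge_min s0 le_max sx orbT.
rewrite -ltNge in hx; rewrite normrN.
rewrite [`|x - x0|]distrC (ger0_norm (x := x0 - x)); last by rewrite subr_ge0 ltW.
refine (@Rint_le `[x, x0] f _ _ _ (@int_pow_l C x x0 m hx)) => s /=; rewrite in_itv /= => /andP[s0 sx].
rewrite -[x0 - s]ger0_norm ?subr_ge0 // distrC; apply: hf.
by rewrite ge_min s0 orbT le_max sx.
Qed.
End S.

Section Comb.
Variable d : nat.
Implicit Types j : 'I_d -> nat.

Lemma sum_even (F : 'I_d -> nat) (P : pred 'I_d) :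
  (forall k, P k -> ~~ odd (F k)) -> ~~ odd (\sum_(k | P k) F k).
Proof.
move=> h; apply: (big_ind (fun n => ~~ odd n)) => // a b ha hb.
by rewrite oddD (negbTE ha) (negbTE hb).
Qed.

Lemma mnormD1 j i : mnorm j = (j i + \sum_(k | k != i) j k)%N.
Proof. by rewrite /mnorm (bigD1 i). Qed.

Lemma le_mnorm j i : (j i <= mnorm j)%N.
Proof. by rewrite (mnormD1 j i) leq_addr. Qed.

Lemma mnorm_mdec j i : (0 < j i)%N -> mnorm (mdec j i) = (mnorm j).-1.
Proof.
move=> h; rewrite (mnormD1 (mdec j i) i) (mnormD1 j i) /mdec eqxx.
rewrite (eq_bigr j); last by move=> k /negbTE ->.
by case: (j i) h.
Qed.

Lemma adm_uniq j k l : admissible j -> odd (j k) -> odd (j l) -> k = l.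
Proof.
move=> ha hk hl; apply/eqP; apply: contraT => kl.
have : (1 < #|[pred i : 'I_d | odd (j i)]|)%N.
  by apply/card_gt1P; exists k, l; split.
by rewrite ltnNge ha.
Qed.

Lemma adm_sub j i : (forall k, odd (j k) -> k = i) -> admissible j.
Proof.
move=> h; rewrite /admissible.
rewrite -(card1 i); apply: subset_leq_card; apply/fintype.subsetP => k.
by rewrite !inE => /h ->.
Qed.

Lemma odd_mnorm j i : (forall k, k != i -> ~~ odd (j k)) -> odd (mnorm j) = odd (j i).
Proof.
move=> h; rewrite (mnormD1 j i) oddD.
by rewrite (negbTE (@sum_even j (fun k => k != i) h)) addbF.
Qed.

Lemma adm_even j : admissible j -> ~~ odd (mnorm j) -> forall k, ~~ odd (j k).
Proof.
move=> ha he k; apply/negP => hk.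
move: he; rewrite (@odd_mnorm j k) ?hk //.
move=> l lk; apply/negP => hl; move/negP: lk; apply.
by apply/eqP; exact: (@adm_uniq j l k ha hl hk).
Qed.

Lemma exists_odd j : odd (mnorm j) -> exists i, odd (j i).
Proof.
move=> h; apply/existsP; apply: contraT; rewrite negb_exists => /forallP hf.
have := @sum_even j predT (fun k _ => hf k).
by rewrite -/(mnorm j) h.
Qed.

Lemma mnorm0 j : mnorm j = 0%N -> forall k, j k = 0%N.
Proof. by move=> h k; have := le_mnorm j k; rewrite h leqn0 => /eqP. Qed.

End Comb.

Section Main.
Variables (R : realType) (d : nat) (x1 x2 x0 : R) (p u0 : R -> R) (r : 'I_d -> R -> R).
Variables (M0 : R) (M : 'I_d -> R).
Hypothesis hM0 : 0 <= M0.
Hypothesis hM : forall i, 0 <= M i.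
Hypothesis bM0 : forall y, y \in `[x1, x2] -> `|(p y * u0 y ^+ 2)^-1| <= M0.
Hypothesis bM : forall i y, y \in `[x1, x2] -> `|r i y * u0 y ^+ 2| <= M i.
Hypothesis hx0 : x0 \in `[x1, x2].

Lemma main_ind n : forall j, mnorm j = n -> admissible j -> forall y, y \in `[x1, x2] ->
  `|Xrec p u0 r x0 n j y| <= (crec n j)%:R * M0 ^+ n./2 *
     (\prod_(i < d) M i ^+ (j i).+1./2) * `|y - x0| ^+ n.
Proof.
have Pge0 : forall j : 'I_d -> nat, 0 <= \prod_(i < d) M i ^+ (j i).+1./2.
  by move=> j; apply: prodr_ge0 => i _; exact: exprn_ge0.
elim: n => [|n IH] j hn ha y hy.
  rewrite /= big1 ?expr0 ?mulr1 ?normr1 ?mul1r //.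
  by move=> i _; rewrite (@mnorm0 _ j hn i) expr0.
have hbet : forall s, Num.min x0 y <= s <= Num.max x0 y -> s \in `[x1, x2].
  move: hx0 hy; rewrite !inE /= !in_itv /= => /andP[a1 a2] /andP[b1 b2] s /andP[s1 s2].
  rewrite inE /= in_itv /=; apply/andP; split.
    by apply: le_trans s1; rewrite le_min a1 b1.
  by apply: le_trans s2 _; rewrite ge_max a2 b2.
have hn1 : n.+1%:R != 0 :> R by rewrite pnatr_eq0.
rewrite [Xrec _ _ _ _ n.+1 _]/= [crec n.+1 _]/=.
case ho: (odd n) => /=.
  have hev : forall k, ~~ odd (j k).
    by apply: (@adm_even _ j ha); rewrite hn /= ho.
  have e0 : n.+1./2 = (n./2).+1 by rewrite -uphalfE uphalf_half ho.
  have ePk : forall k, (0 < j k)%N ->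
      \prod_(i < d) M i ^+ (mdec j k i).+1./2 = \prod_(i < d) M i ^+ (j i).+1./2.
    move=> k hk; apply: eq_bigr => l _; rewrite /mdec; case: eqP => // ->.
    by rewrite prednK // -uphalfE uphalf_half (negbTE (hev k)).
  set S := (\sum_(k < d) (if (0 < j k)%N then (crec n (mdec j k))%:R else 0)) : R.
  have S0 : 0 <= S by apply: sumr_ge0 => k _; case: ifP.
  set C := M0 * (S * M0 ^+ n./2 * \prod_(i < d) M i ^+ (j i).+1./2).
  have C0 : 0 <= C.
    by apply: mulr_ge0 => //; apply: mulr_ge0 => //; apply: mulr_ge0 => //; exact: exprn_ge0.
  have H : forall s, Num.min x0 y <= s <= Num.max x0 y ->
      `|(p s * u0 s ^+ 2)^-1 * \sum_(i < d)
          (if (0 < j i)%N then Xrec p u0 r x0 n (mdec j i) s else 0)| <= C * `|s - x0| ^+ n.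
    move=> s /hbet hs; rewrite normrM /C -mulrA.
    apply: ler_pM => //; first exact: bM0.
    apply: le_trans (ler_norm_sum _ _ _) _.
    rewrite /S !mulr_suml; apply: ler_sum => k _; case: ifP => hk; last by rewrite normr0 !mul0r.
    rewrite -(ePk k hk); apply: IH => //.
      by rewrite mnorm_mdec // hn.
    apply: (@adm_sub _ _ k) => l; rewrite /mdec; case: eqP => // _ hl.
    by move: (hev l); rewrite hl.
  have hb := @oint_bound R _ C n x0 y C0 H.
  rewrite normrM ger0_norm ?ler0n //.
  apply: le_trans (ler_wpM2l (ler0n _ _) hb) _.
  have es : (((\sum_(k < d) (if (0 < j k)%N then crec n (mdec j k) else 0))%N)%:R : R) = S.
    by rewrite natr_sum; apply: eq_bigr => k _; case: ifP.
  rewrite es !uphalfE e0 /C le_eqVlt; apply/orP; left; apply/eqP.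
  rewrite (_ : \prod_(i < d) M i ^+ uphalf (j i) = \prod_(i < d) M i ^+ (j i).+1./2) //.
  rewrite [M0 ^+ _.+1]exprS [`|y - x0| ^+ _.+1]exprS.
  by field.
case: pickP => [i hi | hnone]; last first.
  have [i hi] : exists i, odd (j i) by apply: (@exists_odd _ j); rewrite hn /= ho.
  by move: (hnone i); rewrite hi.
have hji : (0 < j i)%N by apply: odd_gt0.
have hoth : forall k, k != i -> ~~ odd (j k).
  move=> k ki; apply/negP => hk; move/negP: ki; apply; apply/eqP.
  exact: (@adm_uniq _ j k i ha hk hi).
have hn' : mnorm (mdec j i) = n by rewrite mnorm_mdec // hn.
have ha' : admissible (mdec j i).
  apply: (@adm_sub _ _ i) => k; rewrite /mdec; case: eqP => // /eqP ki hk.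
  by move: (hoth k ki); rewrite hk.
have e0 : n.+1./2 = n./2 by rewrite -uphalfE uphalf_half ho.
have eP : \prod_(k < d) M k ^+ (j k).+1./2 =
    M i * \prod_(k < d) M k ^+ (mdec j i k).+1./2.
  rewrite (bigD1 i) //= [in RHS](bigD1 i) //= /mdec eqxx mulrA -exprS.
  congr (_ ^+ _ * _).
    move: hi hji; case: (j i) => // k hk _ /=; rewrite uphalf_half; rewrite /= in hk; by rewrite (negbTE hk).
  by apply: eq_bigr => k hk; rewrite (negbTE hk).
set C := M i * ((crec n (mdec j i))%:R * M0 ^+ n./2 * \prod_(k < d) M k ^+ (mdec j i k).+1./2).
have C0 : 0 <= C.
  by apply: mulr_ge0 => //; apply: mulr_ge0 => //; apply: mulr_ge0 => //; exact: exprn_ge0.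
have H : forall s, Num.min x0 y <= s <= Num.max x0 y ->
    `|r i s * u0 s ^+ 2 * Xrec p u0 r x0 n (mdec j i) s| <= C * `|s - x0| ^+ n.
  move=> s /hbet hs; rewrite normrM /C -mulrA.
  apply: ler_pM => //; first exact: bM.
  exact: IH.
have hb := @oint_bound R _ C n x0 y C0 H.
rewrite normrM ger0_norm ?ler0n //.
apply: le_trans (ler_wpM2l (ler0n _ _) hb) _.
rewrite !uphalfE e0 eP /C le_eqVlt; apply/orP; left; apply/eqP.
by field.
Qed.
End Main.

Theorem mainTheorem4 (R : realType) (d : nat) (hd : (0 < d)%N)
  (x1 x2 x0 : R) (h12 : x1 < x2) (hx0 : x0 \in `[x1, x2])
  (p u0 : R -> R) (r : 'I_d -> R -> R)
  (mp : measurable_fun `[x1, x2] p)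
  (mu0 : measurable_fun `[x1, x2] u0)
  (mr : forall i, measurable_fun `[x1, x2] (r i))
  (hu0 : forall x, x \in `[x1, x2] -> u0 x != 0)
  (hp : forall x, x \in `[x1, x2] -> p x != 0)
  (hM0 : has_ubound [set `|(p x * u0 x ^+ 2)^-1| | x in `[x1, x2]])
  (hMi : forall i, has_ubound [set `|r i x * u0 x ^+ 2| | x in `[x1, x2]])
  (j : 'I_d -> nat) (hj : admissible j) (x : R) (hx : x \in `[x1, x2]) :
  let M0 := sup [set `|(p y * u0 y ^+ 2)^-1| | y in `[x1, x2]] in
  let M := fun i => sup [set `|r i y * u0 y ^+ 2| | y in `[x1, x2]] in
  `|Xt p u0 r x0 j x| <=
    (ct j)%:R * M0 ^+ (mnorm j)./2 * (\prod_(i < d) M i ^+ (j i).+1./2)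
    * `|x - x0| ^+ mnorm j.
Proof.
pose M0 := sup [set `|(p y * u0 y ^+ 2)^-1| | y in `[x1, x2]].
pose M := fun i => sup [set `|r i y * u0 y ^+ 2| | y in `[x1, x2]].
have bM0 : forall y, y \in `[x1, x2] -> `|(p y * u0 y ^+ 2)^-1| <= M0.
  move=> y hy; have h := ub_le_sup hM0; rewrite /ubound /= in h; rewrite /M0; apply: h; exists y => //; move: hy; by rewrite inE.
have bM : forall i y, y \in `[x1, x2] -> `|r i y * u0 y ^+ 2| <= M i.
  move=> i y hy; have h := ub_le_sup (hMi i); rewrite /ubound /= in h; rewrite /M; apply: h; exists y => //; move: hy; by rewrite inE.
have hM0' : 0 <= M0 by apply: le_trans (normr_ge0 _) (bM0 x hx).
have hM' : forall i, 0 <= M i by move=> i; apply: le_trans (normr_ge0 _) (bM i x hx).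
exact: (@main_ind R d x1 x2 x0 p u0 r M0 M hM0' hM' bM0 bM hx0 (mnorm j) j erefl hj x hx).
Qed.
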